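(* Let $N$ be the point-line configuration on $[7]$ with lines $\{3,4,6\},\{2,6,7\},\{1,5,6\},\{2,3,5\},\{1,4,7\}$. Then, in $\mathbb{C}^{21}$, \[ V_{\mathcal{C}(N)}=V_N\cup V_{U_{2,7}}\cup V_{N(6)}. \]
   Context: A point-line configuration on $[d]$ is a simple matroid of rank at most $3$ whose lines are the maximal subsets of size $\ge3$ and rank $2$ (a $3$-subset is dependent iff it lies in a line; every subset of size $\ge4$ is dependent). $U_{2,7}$ is the uniform matroid of rank $2$ on $[7]$ (a subset is dependent iff it has size $\ge3$). $N(6)$ is the matroid obtained from $N$ by making $6$ a loop: its circuits are $\mathcal{C}(N\setminus 6)\cup\{\{6\}\}$, where $N\setminus6$ is the restriction of $N$ to $[7]\setminus\{6\}$. For a matroid $K$ on $[d]$ of rank $\le3$: a realization is $\gamma\in(\mathbb{C}^3)^d$ such that for all $S\subseteq[d]$, $(\gamma_s)_{s\in S}$ is linearly dependent iff $S$ is dependent in $K$; $V_K$ is the Zariski closure in $\mathbb{C}^{3d}$ of the set of realizations; the circuit variety $V_{\mathcal{C}(K)}$ is the set of $\gamma\in(\mathbb{C}^3)^d$ such that $(\gamma_s)_{s\in S}$ is linearly dependent for every dependent set $S$ of $K$. *)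

(* Defs.v *)
From HB Require Import structures.
From mathcomp Require Import all_boot all_order all_algebra.
From mathcomp Require Import reals complex.
From mathcomp Require mpoly.
Set Implicit Arguments. Unset Strict Implicit. Unset Printing Implicit Defensive.
Import GRing.Theory Num.Theory.
Local Open Scope ring_scope.

(* Ground set [7] = {1,...,7}; element i of [7] is the ordinal i-1 of 'I_7. *)
Definition el (i : nat) : 'I_7 := inord i.-1.

(* A matroid on [7] is given by its predicate of dependent sets. *)
Definition matroid7 := {set 'I_7} -> bool.

(* Point-line configuration with a given list of lines (rank <= 3, simple):
   subsets of size >= 4 are dependent, a 3-subset is dependent iff it lies
   in a line, subsets of size <= 2 are independent. *)
Definition plc_dep (lines : seq {set 'I_7}) : matroid7 := fun S =>
  (3 < #|S|)%N || ((#|S| == 3)%N && seq.has (fun L : {set 'I_7} => S \subset L) lines).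

Definition N_lines : seq {set 'I_7} :=
  [:: [set el 3; el 4; el 6]; [set el 2; el 6; el 7]; [set el 1; el 5; el 6];
      [set el 2; el 3; el 5]; [set el 1; el 4; el 7]].

Definition N_dep : matroid7 := plc_dep N_lines.

Definition U27_dep : matroid7 := fun S => (2 < #|S|)%N.

Definition is_circuit (dep : matroid7) (C : {set 'I_7}) : bool :=
  dep C && [forall D : {set 'I_7}, (D \proper C) ==> ~~ dep D].

Definition dep_of_circuits (circ : pred {set 'I_7}) : matroid7 := fun S =>
  [exists C : {set 'I_7}, circ C && (C \subset S)].

(* circuits of the deletion K \ e, viewed as subsets of [7] avoiding e *)
Definition deletion_circuit (dep : matroid7) (e : 'I_7) : pred {set 'I_7} :=
  fun C => is_circuit dep C && (e \notin C).

Definition make_loop (dep : matroid7) (e : 'I_7) : matroid7 :=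
  dep_of_circuits (fun C => deletion_circuit dep e C || (C == [set e])).

Definition N6_dep : matroid7 := make_loop N_dep (el 6).

Section Varieties.
Variable R : realType.
Local Notation C := (R[i]).

(* A point of (C^3)^7 = C^21: a 7x3 matrix whose s-th row is gamma_s. *)
Definition conf := 'M[C]_(7, 3).

Definition lin_dep (g : conf) (S : {set 'I_7}) : Prop :=
  exists c : 'rV[C]_7,
    c != 0 /\ (forall s, s \notin S -> c 0 s = 0) /\ c *m g = 0.

Definition coords (g : conf) : 'I_(7 * 3) -> C := fun k => mxvec g 0 k.

Definition zariski_closure (A : conf -> Prop) : conf -> Prop := fun g =>
  forall p : mpoly.mpoly (7 * 3) C,
    (forall h, A h -> mpoly.meval (coords h) p = 0) ->
    mpoly.meval (coords g) p = 0.

Definition is_realization (dep : matroid7) (g : conf) : Prop :=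
  forall S : {set 'I_7}, lin_dep g S <-> dep S.

Definition V (dep : matroid7) : conf -> Prop :=
  zariski_closure (is_realization dep).

Definition circuit_variety (dep : matroid7) : conf -> Prop := fun g =>
  forall S : {set 'I_7}, dep S -> lin_dep g S.

End Varieties.

(* Main.v *)
Require Import Defs.
From HB Require Import structures.
From mathcomp Require Import all_boot all_order all_algebra.
From mathcomp Require Import reals complex.
From mathcomp Require Import ring.
From mathcomp Require Import mpoly.
From Stdlib Require Import FunctionalExtensionality.
Set Implicit Arguments. Unset Strict Implicit. Unset Printing Implicit Defensive.
Import GRing.Theory Num.Theory.
Local Open Scope ring_scope.

Section Vec.
Variable R : comNzRingType.
Definition v3 := (R * R * R)%type.
Definition vx (v : v3) := v.1.1.
Definition vy (v : v3) := v.1.2.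
Definition vz (v : v3) := v.2.
Definition dot (u v : v3) := vx u * vx v + vy u * vy v + vz u * vz v.
Definition cross (u v : v3) : v3 :=
  (vy u * vz v - vz u * vy v, vz u * vx v - vx u * vz v, vx u * vy v - vy u * vx v).
Definition det3 (u v w : v3) := dot u (cross v w).
Definition vadd (u v : v3) : v3 := (vx u + vx v, vy u + vy v, vz u + vz v).
Definition vsc (s : R) (u : v3) : v3 := (s * vx u, s * vy u, s * vz u).
Definition v0 : v3 := (0, 0, 0).
End Vec.

Definition vmap (R S : comNzRingType) (f : R -> S) (u : v3 R) : v3 S :=
  (f (vx u), f (vy u), f (vz u)).

Ltac vdestr := repeat match goal with
  | u : v3 _ |- _ => let a := fresh "a" in let b := fresh "b" in let c := fresh "c" in
                     destruct u as [[a b] c]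
  end.
Ltac vring := vdestr; rewrite /det3 /dot /cross /vadd /vsc /v0 /vx /vy /vz /=; try (congr (_,_,_)); ring.

Ltac lin0 e := match type of e with ?a = 0 => first
  [ apply: (@etrans _ _ (0 * a)); [ring | by rewrite e mulr0]
  | apply: (@etrans _ _ (1 * a)); [ring | by rewrite e mulr0]
  | apply: (@etrans _ _ (-1 * a)); [ring | by rewrite e mulr0] ] end.

Section VecLemmas.
Variable R : comNzRingType.
Implicit Types u v w x : v3 R.
Lemma det3_cross_zero (n a b c : v3 R) :
  det3 (cross n a) (cross n b) (cross n c) = 0.
Proof. vring. Qed.
Lemma cramer_vec u v w x :
  vsc (det3 u v w) x = vadd (vadd (vsc (dot x (cross v w)) u) (vsc (dot x (cross w u)) v))
                            (vsc (dot x (cross u v)) w).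
Proof. vdestr; rewrite /det3 /dot /cross /vadd /vsc /vx /vy /vz /=; congr (_,_,_); ring. Qed.
End VecLemmas.
Section Lin.
Variable R : realType.
Local Notation C := (R[i]).
Definition i0 : 'I_3 := @Ordinal 3 0 isT.
Definition i1 : 'I_3 := @Ordinal 3 1 isT.
Definition i2 : 'I_3 := @Ordinal 3 2 isT.
Definition rowv (g : conf R) (i : 'I_7) : v3 C := (g i i0, g i i1, g i i2).
Definition comp (u : v3 C) (j : 'I_3) : C :=
  match val j with 0 => vx u | 1 => vy u | _ => vz u end.
Definition mkconf (f : 'I_7 -> v3 C) : conf R := \matrix_(i, j) comp (f i) j.
Lemma ord3P (j : 'I_3) : j = i0 \/ j = i1 \/ j = i2.
Proof. case: j => [[|[|[|k]]] Hk]; [left|right;left|right;right|by []]; exact: val_inj. Qed.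
Lemma rowv_mkconf f i : rowv (mkconf f) i = f i.
Proof. by rewrite /rowv !mxE /comp /=; case: (f i) => [[]]. Qed.
Lemma mkconf_rowv g : mkconf (rowv g) = g.
Proof. apply/matrixP => i j; rewrite mxE /comp /rowv /vx /vy /vz /=.
  by case: (ord3P j) => [->|[->|->]]. Qed.

Lemma lin_depP g S : lin_dep g S <->
  exists c : 'I_7 -> C, (exists s, c s != 0) /\ (forall s, s \notin S -> c s = 0) /\
     (forall j, \sum_s c s * g s j = 0).
Proof. split.
- move=> [cv [cne [cs cz]]]; exists (fun s => cv 0 s); split; last split.
  + apply/existsP; apply: contraR cne => /existsPn H; apply/eqP/rowP => s.
    by rewrite mxE; move/negPn: (H s) => /eqP ->.
  + by [].
  + move=> j; move/matrixP: cz => /(_ 0 j); by rewrite !mxE.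
- move=> [c [[s cs] [csupp cz]]]; exists (\row_s c s); split; last split.
  + apply/eqP => /rowP /(_ s); rewrite !mxE => /eqP; exact/negP.
  + by move=> s' hs; rewrite mxE csupp.
  + apply/matrixP => i j; rewrite !mxE (ord1 i) -[RHS](cz j).
    by apply: eq_bigr => k _; rewrite mxE.
Qed.
End Lin.
Section LinDep.
Variable R : realType.
Local Notation C := (R[i]).
Implicit Types u v w z : v3 C.

Lemma vec_eqP u v : vx u = vx v -> vy u = vy v -> vz u = vz v -> u = v.
Proof. by case: u => [[? ?] ?]; case: v => [[? ?] ?]; rewrite /vx /vy /vz /= => -> -> ->. Qed.

Lemma indep3_vec u v w ca cb cd : det3 u v w != 0 ->
  vadd (vadd (vsc ca u) (vsc cb v)) (vsc cd w) = v0 C -> [/\ ca = 0, cb = 0 & cd = 0].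
Proof.
move=> hd hc.
have z0 : forall x, dot (v0 C) x = 0 by move=> x; vring.
have e1 : ca * det3 u v w = 0.
  by rewrite -(z0 (cross v w)) -hc; vring.
have e2 : cb * det3 u v w = 0.
  by rewrite -(z0 (cross w u)) -hc; vring.
have e3 : cd * det3 u v w = 0.
  by rewrite -(z0 (cross u v)) -hc; vring.
split; [move/eqP: e1|move/eqP: e2|move/eqP: e3];
  by rewrite mulf_eq0 (negPf hd) orbF => /eqP.
Qed.

Lemma indep2_vec u v z ca cb : det3 u v z != 0 ->
  vadd (vsc ca u) (vsc cb v) = v0 C -> ca = 0 /\ cb = 0.
Proof.
move=> hd hc.
have z0 : forall x, dot (v0 C) x = 0 by move=> x; vring.
have e1 : ca * det3 u v z = 0.
  by rewrite -(z0 (cross v z)) -hc; vring.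
have e2 : cb * det3 u v z = 0.
  by rewrite -(z0 (cross z u)) -hc; vring.
split; [move/eqP: e1|move/eqP: e2];
  by rewrite mulf_eq0 (negPf hd) orbF => /eqP.
Qed.

Lemma v3_neq0 u : u != v0 C -> [\/ vx u != 0, vy u != 0 | vz u != 0].
Proof.
case: u => [[a b] c] /=; rewrite /vx /vy /vz /= => H.
case: (eqVneq a 0) => [a0|]; last by constructor 1.
case: (eqVneq b 0) => [b0|]; last by constructor 2.
case: (eqVneq c 0) => [c0|]; last by constructor 3.
by move: H; rewrite a0 b0 c0 eqxx.
Qed.

Lemma dep3_vec u v w : det3 u v w = 0 ->
  exists ca cb cd, ~~ [&& ca == 0, cb == 0 & cd == 0] /\
    vadd (vadd (vsc ca u) (vsc cb v)) (vsc cd w) = v0 C.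
Proof.
move=> hd.
have cv := cramer_vec u v w.
case: (eqVneq (cross v w) (v0 C)) => [vw0|vwn].
- case: (eqVneq v (v0 C)) => [->|vn].
  + exists 0, 1, 0; split; first by rewrite oner_eq0 /= andbF.
    by apply: vec_eqP; rewrite /vadd /vsc /= /vx /vy /vz /=; ring.
    move: vw0; case: (v3_neq0 vn) => hk vw0.
    * exists 0, (- vx w), (vx v); split; first by rewrite (negPf hk) /= ?andbF.
      move: vw0; vdestr; rewrite /cross /vadd /vsc /vx /vy /vz /= => [[e1 e2 e3]].
      apply: vec_eqP; rewrite /vx /vy /vz /=.
      - ring.
      - lin0 e3.
      - lin0 e2.
    * exists 0, (- vy w), (vy v); split; first by rewrite (negPf hk) /= ?andbF.
      move: vw0; vdestr; rewrite /cross /vadd /vsc /vx /vy /vz /= => [[e1 e2 e3]].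
      apply: vec_eqP; rewrite /vx /vy /vz /=.
      - lin0 e3.
      - ring.
      - lin0 e1.
    * exists 0, (- vz w), (vz v); split; first by rewrite (negPf hk) /= ?andbF.
      move: vw0; vdestr; rewrite /cross /vadd /vsc /vx /vy /vz /= => [[e1 e2 e3]].
      apply: vec_eqP; rewrite /vx /vy /vz /=.
      - lin0 e2.
      - lin0 e1.
      - ring.
- case: (v3_neq0 vwn) => hk.
  + exists (vx (cross v w)), (vx (cross w u)), (vx (cross u v)); split; first by rewrite (negPf hk).
    move: hd; vdestr; rewrite /det3 /dot /cross /vadd /vsc /vx /vy /vz /= => hd.
    apply: vec_eqP; rewrite /vx /vy /vz /=; lin0 hd.
  + exists (vy (cross v w)), (vy (cross w u)), (vy (cross u v)); split; first by rewrite (negPf hk).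
    move: hd; vdestr; rewrite /det3 /dot /cross /vadd /vsc /vx /vy /vz /= => hd.
    apply: vec_eqP; rewrite /vx /vy /vz /=; lin0 hd.
  + exists (vz (cross v w)), (vz (cross w u)), (vz (cross u v)); split; first by rewrite (negPf hk).
    move: hd; vdestr; rewrite /det3 /dot /cross /vadd /vsc /vx /vy /vz /= => hd.
    apply: vec_eqP; rewrite /vx /vy /vz /=; lin0 hd.
Qed.
End LinDep.
Section LinDep2.
Variable R : realType.
Local Notation C := (R[i]).
Implicit Types (g : conf R) (S : {set 'I_7}).

Lemma det3_eq12 (u w : v3 C) : det3 u u w = 0. Proof. vring. Qed.
Lemma det3_eq13 (u w : v3 C) : det3 u w u = 0. Proof. vring. Qed.
Lemma det3_eq23 (u w : v3 C) : det3 w u u = 0. Proof. vring. Qed.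

Lemma sum_supp3 (c X : 'I_7 -> C) a b d : a != b -> a != d -> b != d ->
  (forall s, s \notin [set a; b; d] -> c s = 0) ->
  \sum_s c s * X s = c a * X a + c b * X b + c d * X d.
Proof.
move=> ab ad bd H.
rewrite (bigD1 a) // (bigD1 b) /=; last by rewrite eq_sym.
rewrite (bigD1 d) /=; last by rewrite eq_sym ad eq_sym bd.
rewrite big1 ?addr0 ?addrA // => s /andP [/andP [sa sb] sd].
by rewrite H ?mul0r // !inE !negb_or sa sb sd.
Qed.

Lemma sum_supp2 (c X : 'I_7 -> C) a b : a != b ->
  (forall s, s \notin [set a; b] -> c s = 0) ->
  \sum_s c s * X s = c a * X a + c b * X b.
Proof.
move=> ab H.
rewrite (bigD1 a) // (bigD1 b) /=; last by rewrite eq_sym.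
rewrite big1 ?addr0 ?addrA // => s /andP [sa sb].
by rewrite H ?mul0r // !inE !negb_or sa sb.
Qed.

Lemma sum_supp4 (c X : 'I_7 -> C) a b d e : a != b -> a != d -> a != e -> b != d -> b != e -> d != e ->
  (forall s, s \notin [set a; b; d; e] -> c s = 0) ->
  \sum_s c s * X s = c a * X a + c b * X b + c d * X d + c e * X e.
Proof.
move=> ab ad ae bd be de H.
rewrite (bigD1 a) // (bigD1 b) /=; last by rewrite eq_sym.
rewrite (bigD1 d) /=; last by rewrite eq_sym ad eq_sym bd.
rewrite (bigD1 e) /=; last by rewrite eq_sym ae eq_sym be eq_sym de.
rewrite big1 ?addr0 ?addrA // => s /andP [/andP [/andP [sa sb] sd] se].
by rewrite H ?mul0r // !inE !negb_or sa sb sd se.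
Qed.

Lemma lin_dep_mono g S (T : {set 'I_7}) : S \subset T -> lin_dep g S -> lin_dep g T.
Proof.
move=> ST [c [cn [cs cz]]]; exists c; split => //; split => // s sT.
by apply: cs; apply: contra sT; apply: (subsetP ST).
Qed.

Lemma rowv_comb g (c : 'I_7 -> C) a b d :
  (forall j, c a * g a j + c b * g b j + c d * g d j = 0) ->
  vadd (vadd (vsc (c a) (rowv g a)) (vsc (c b) (rowv g b))) (vsc (c d) (rowv g d)) = v0 C.
Proof. by move=> H; apply: vec_eqP; rewrite /vadd /vsc /rowv /vx /vy /vz /= H. Qed.

Lemma indep3 g a b d S : det3 (rowv g a) (rowv g b) (rowv g d) != 0 ->
  S \subset [set a; b; d] -> ~ lin_dep g S.
Proof.
move=> hd hS /lin_depP [c [[s cs] [cS cz]]].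
have ab : a != b by apply: contraNneq hd => ->; rewrite det3_eq12.
have ad : a != d by apply: contraNneq hd => ->; rewrite det3_eq13.
have bd : b != d by apply: contraNneq hd => ->; rewrite det3_eq23.
have supp : forall s, s \notin [set a; b; d] -> c s = 0.
  by move=> s' hs; apply: cS; apply: contra hs; apply: (subsetP hS).
have hj : forall j, c a * g a j + c b * g b j + c d * g d j = 0.
  by move=> j; rewrite -(sum_supp3 (fun s => g s j) ab ad bd supp) cz.
have [ha hb hd'] := indep3_vec hd (rowv_comb hj).
move: cs; case: (boolP (s \in [set a; b; d])) => [|/supp -> ]; last by rewrite eqxx.
by rewrite !inE => /orP [/orP [] | ] /eqP ->; rewrite ?ha ?hb ?hd' eqxx.
Qed.

Lemma indep2 g a b z S : det3 (rowv g a) (rowv g b) z != 0 ->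
  S \subset [set a; b] -> ~ lin_dep g S.
Proof.
move=> hd hS /lin_depP [c [[s cs] [cS cz]]].
have ab : a != b by apply: contraNneq hd => ->; rewrite det3_eq12.
have supp : forall s, s \notin [set a; b] -> c s = 0.
  by move=> s' hs; apply: cS; apply: contra hs; apply: (subsetP hS).
have hj : forall j, c a * g a j + c b * g b j = 0.
  by move=> j; rewrite -(sum_supp2 (fun s => g s j) ab supp) cz.
have hv : vadd (vsc (c a) (rowv g a)) (vsc (c b) (rowv g b)) = v0 C.
  by apply: vec_eqP; rewrite /vadd /vsc /rowv /vx /vy /vz /= hj.
have [ha hb] := indep2_vec hd hv.
move: cs; case: (boolP (s \in [set a; b])) => [|/supp -> ]; last by rewrite eqxx.
by rewrite !inE => /orP [] /eqP ->; rewrite ?ha ?hb eqxx.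
Qed.

Lemma comb_comp (ca cb cd : C) (u v w : v3 C) j :
  vadd (vadd (vsc ca u) (vsc cb v)) (vsc cd w) = v0 C ->
  ca * comp u j + cb * comp v j + cd * comp w j = 0.
Proof.
move=> H; case: (ord3P j) => [->|[->|->]]; rewrite /comp /=;
 move: H; rewrite /vadd /vsc /vx /vy /vz /= => [[]] //.
Qed.

Lemma dep3 g a b d : a != b -> a != d -> b != d ->
  det3 (rowv g a) (rowv g b) (rowv g d) = 0 -> lin_dep g [set a; b; d].
Proof.
move=> ab ad bd hd.
have [ca [cb [cd [cn hc]]]] := dep3_vec hd.
pose c := fun s => if s == a then ca else if s == b then cb else if s == d then cd else 0.
apply/lin_depP; exists c; split; last split.
- case: (eqVneq ca 0) => [ca0|h]; last by exists a; rewrite /c eqxx.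
  case: (eqVneq cb 0) => [cb0|h]; last by exists b; rewrite /c (eq_sym b) (negbTE ab) eqxx.
  case: (eqVneq cd 0) => [cd0|h]; last by exists d; rewrite /c (eq_sym d) (negbTE ad) (eq_sym d) (negbTE bd) eqxx.
  by move: cn; rewrite ca0 cb0 cd0 eqxx.
- move=> s; rewrite !inE !negb_or => /andP [/andP [sa sb] sd]; rewrite /c (negbTE sa) (negbTE sb) (negbTE sd) //.
- move=> j.
  have supp : forall s, s \notin [set a; b; d] -> c s = 0.
    by move=> s; rewrite !inE !negb_or => /andP [/andP [sa sb] sd]; rewrite /c (negbTE sa) (negbTE sb) (negbTE sd).
  rewrite (sum_supp3 (fun s => g s j) ab ad bd supp).
  have e : forall s, g s j = comp (rowv g s) j by move=> s; case: (ord3P j) => [->|[->|->]].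
  have -> : c a = ca by rewrite /c eqxx.
  have -> : c b = cb by rewrite /c eq_sym (negbTE ab) eqxx.
  have -> : c d = cd by rewrite /c eq_sym (negbTE ad) eq_sym (negbTE bd) eqxx.
  rewrite !e.
  exact: comb_comp hc.
Qed.
End LinDep2.
Section LinDep3.
Variable R : realType.
Local Notation C := (R[i]).
Implicit Types (g : conf R) (S : {set 'I_7}).

Lemma dep4_vec (u v w x : v3 C) : exists ca cb cd ce,
  ~~ [&& ca == 0, cb == 0, cd == 0 & ce == 0] /\
  vadd (vadd (vadd (vsc ca u) (vsc cb v)) (vsc cd w)) (vsc ce x) = v0 C.
Proof.
case: (eqVneq (det3 u v w) 0) => [hd|hd].
- have [ca [cb [cd [cn hc]]]] := dep3_vec hd.
  exists ca, cb, cd, 0; split; first by move: cn; rewrite eqxx andbT.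
  by move: hc; vdestr; rewrite /vadd /vsc /vx /vy /vz /= => [[e1 e2 e3]]; apply: vec_eqP;
    rewrite /vx /vy /vz /= ?e1 ?e2 ?e3 ?mul0r ?addr0.
- exists (dot x (cross v w)), (dot x (cross w u)), (dot x (cross u v)), (- det3 u v w).
  split; first by rewrite oppr_eq0 (negbTE hd) !andbF.
  have cv := cramer_vec u v w x.
  move: cv; vdestr; rewrite /det3 /dot /cross /vadd /vsc /vx /vy /vz /= => [[e1 e2 e3]].
  apply: vec_eqP; rewrite /vx /vy /vz /=.
  + by rewrite -e1; ring.
  + by rewrite -e2; ring.
  + by rewrite -e3; ring.
Qed.

Lemma dep_coeffs4 g a b d e (ca cb cd ce : C) :
  a != b -> a != d -> a != e -> b != d -> b != e -> d != e ->
  ~~ [&& ca == 0, cb == 0, cd == 0 & ce == 0] ->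
  vadd (vadd (vadd (vsc ca (rowv g a)) (vsc cb (rowv g b))) (vsc cd (rowv g d))) (vsc ce (rowv g e)) = v0 C ->
  lin_dep g [set a; b; d; e].
Proof.
move=> ab ad ae bd be de cn hc.
pose c := fun s => if s == a then ca else if s == b then cb else if s == d then cd
                   else if s == e then ce else 0.
have Ca : c a = ca by rewrite /c eqxx.
have Cb : c b = cb by rewrite /c eq_sym (negbTE ab) eqxx.
have Cd : c d = cd by rewrite /c eq_sym (negbTE ad) eq_sym (negbTE bd) eqxx.
have Ce : c e = ce by rewrite /c eq_sym (negbTE ae) eq_sym (negbTE be) eq_sym (negbTE de) eqxx.
have supp : forall s, s \notin [set a; b; d; e] -> c s = 0.
  by move=> s; rewrite !inE !negb_or => /andP [/andP [/andP [sa sb] sd] se];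
     rewrite /c (negbTE sa) (negbTE sb) (negbTE sd) (negbTE se).
apply/lin_depP; exists c; split; last split.
- case: (eqVneq ca 0) => [ca0|h]; last by exists a; rewrite Ca.
  case: (eqVneq cb 0) => [cb0|h]; last by exists b; rewrite Cb.
  case: (eqVneq cd 0) => [cd0|h]; last by exists d; rewrite Cd.
  case: (eqVneq ce 0) => [ce0|h]; last by exists e; rewrite Ce.
  by move: cn; rewrite ca0 cb0 cd0 ce0 eqxx.
- exact: supp.
- move=> j; rewrite (sum_supp4 (fun s => g s j) ab ad ae bd be de supp) Ca Cb Cd Ce.
  move: hc; rewrite /vadd /vsc /rowv /vx /vy /vz /= => [[e1 e2 e3]].
  by case: (ord3P j) => [->|[->|->]].
Qed.

Lemma dep4 g a b d e : a != b -> a != d -> a != e -> b != d -> b != e -> d != e ->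
  lin_dep g [set a; b; d; e].
Proof.
move=> ab ad ae bd be de.
have [ca [cb [cd [ce [cn hc]]]]] := dep4_vec (rowv g a) (rowv g b) (rowv g d) (rowv g e).
exact: dep_coeffs4 cn hc.
Qed.

Lemma ge4 g S : (3 < #|S|)%N -> lin_dep g S.
Proof.
move=> hS.
have [a aS] : exists a, a \in S by apply/card_gt0P; apply: leq_trans hS.
have h1 : (2 < #|S :\ a|)%N by move: hS; rewrite (cardsD1 a S) aS.
have [b bS] : exists b, b \in S :\ a by apply/card_gt0P; apply: leq_trans h1.
have h2 : (1 < #|S :\ a :\ b|)%N by move: h1; rewrite (cardsD1 b (S :\ a)) bS.
have [d dS] : exists d, d \in S :\ a :\ b by apply/card_gt0P; apply: leq_trans h2.
have h3 : (0 < #|S :\ a :\ b :\ d|)%N by move: h2; rewrite (cardsD1 d (S :\ a :\ b)) dS.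
have [e eS] : exists e, e \in S :\ a :\ b :\ d by apply/card_gt0P.
move: bS dS eS; rewrite !inE => /andP [ba bS] /andP [db /andP [da dS]]
  /andP [ed /andP [eb /andP [ea eS]]].
have sub : [set a; b; d; e] \subset S.
  by apply/subsetP => x; rewrite !inE => /orP [/orP [/orP []|]|] /eqP ->.
by apply: (lin_dep_mono sub); apply: dep4; rewrite eq_sym.
Qed.

Lemma dep1 g a : rowv g a = v0 C -> lin_dep g [set a].
Proof.
move=> h; apply/lin_depP; exists (fun s => if s == a then 1 else 0); split; last split.
- by exists a; rewrite eqxx oner_eq0.
- by move=> s; rewrite inE => /negbTE ->.
- move=> j; rewrite (bigD1 a) // big1 => [|s /negbTE ->]; last by rewrite mul0r.
  rewrite eqxx /= mul1r; move: h; rewrite /rowv /vx /vy /vz => [[e1 e2 e3]].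
  by rewrite addr0; case: (ord3P j) => [->|[->|->]].
Qed.

Lemma lin_dep_det g a b d : lin_dep g [set a; b; d] -> det3 (rowv g a) (rowv g b) (rowv g d) = 0.
Proof. by move=> h; apply/eqP; apply: contraPT h => /indep3; apply. Qed.
End LinDep3.
Definition setN (l : seq nat) : {set 'I_7} := [set x : 'I_7 | val x \in l].
Definition mask7 (S : {set 'I_7}) : seq bool := [seq (inord k : 'I_7) \in S | k <- iota 0 7].
Definition subm (m : seq bool) (l : seq nat) : bool :=
  all (fun k => nth false m k ==> (k \in l)) (iota 0 7).
Definition allmasks : seq (seq bool) :=
  foldr (fun _ acc => [seq b :: s | b <- [:: true; false], s <- acc]) [:: [::]] (iota 0 7).

Lemma inord_val7 (x : 'I_7) : inord (val x) = x.
Proof. exact: inord_val. Qed.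
Lemma val_inord7 k : (k < 7)%N -> val (inord k : 'I_7) = k.
Proof. by move=> h; rewrite /= inordK. Qed.

Lemma mask7_nth (S : {set 'I_7}) k : (k < 7)%N -> nth false (mask7 S) k = ((inord k : 'I_7) \in S).
Proof. by move=> h; rewrite /mask7 (nth_map 0) ?size_iota // nth_iota. Qed.

Lemma mask7_size (S : {set 'I_7}) : size (mask7 S) = 7.
Proof. by rewrite /mask7 size_map size_iota. Qed.

Lemma allmasksP (m : seq bool) : size m = 7 -> m \in allmasks.
Proof.
case: m => [|b0 [|b1 [|b2 [|b3 [|b4 [|b5 [|b6 [|? ?]]]]]]]] //= _.
by case: b0; case: b1; case: b2; case: b3; case: b4; case: b5; case: b6; vm_compute.
Qed.

Lemma enum_I7 : enum 'I_7 = [seq inord k | k <- iota 0 7].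
Proof. by rewrite -val_enum_ord -map_comp (eq_map inord_val7) map_id. Qed.

Lemma card_mask7 (S : {set 'I_7}) : #|S| = count id (mask7 S).
Proof.
rewrite cardE /enum_mem -enumT size_filter enum_I7 /mask7 !count_map.
by apply: eq_count.
Qed.
Lemma sub_setN_mask (S : {set 'I_7}) l : (S \subset setN l) = subm (mask7 S) l.
Proof.
apply/subsetP/allP => [H k|H x xS].
- rewrite mem_iota add0n => /andP [_ k7]; rewrite mask7_nth //; apply/implyP => /H.
  by rewrite inE val_inord7.
- have k7 : val x \in iota 0 7 by rewrite mem_iota add0n ltn_ord.
  move/implyP: (H _ k7); rewrite mask7_nth ?ltn_ord // inord_val7 => /(_ xS).
  by rewrite inE.
Qed.

Lemma setN_sub_mask (S : {set 'I_7}) l : all (fun k => nth false (mask7 S) k) l -> setN l \subset S.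
Proof.
move=> /allP H; apply/subsetP => x; rewrite inE => /H.
by rewrite mask7_nth ?ltn_ord // inord_val7.
Qed.

Lemma setN3_sub a b c : setN [:: a; b; c] \subset [set (inord a : 'I_7); inord b; inord c].
Proof.
apply/subsetP => x; rewrite !inE => /orP [/eqP <-|/orP [/eqP <-|/eqP <-]];
  by rewrite inord_val7 eqxx ?orbT.
Qed.

Lemma setN2_sub a b : setN [:: a; b] \subset [set (inord a : 'I_7); inord b].
Proof.
apply/subsetP => x; rewrite !inE => /orP [/eqP <-|/eqP <-];
  by rewrite inord_val7 eqxx ?orbT.
Qed.

Section Realize.
Variable R : realType.
Local Notation C := (R[i]).

Definition crow (g : conf R) (k : nat) := rowv g (inord k).

Lemma realize (dep : matroid7) (DB : seq bool -> bool) (depsets : seq (seq nat))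
   (certs : seq (nat * nat * nat)) (g : conf R) :
  (forall S, dep S = DB (mask7 S)) ->
  all (fun m => DB m ==> ((3 < count id m)%N || has (fun t => all (fun k => nth false m k) t) depsets)) allmasks ->
  all (fun m => ~~ DB m ==> has (fun c => subm m [:: c.1.1; c.1.2; c.2]) certs) allmasks ->
  (forall t, t \in depsets -> lin_dep g (setN t)) ->
  (forall c, c \in certs -> det3 (crow g c.1.1) (crow g c.1.2) (crow g c.2) != 0) ->
  is_realization dep g.
Proof.
move=> Hdep /allP C1 /allP C2 Hds Hc S; rewrite Hdep.
have mS := allmasksP (mask7_size S).
split.
- move=> hl; apply/negPn/negP => hnd.
  have /hasP [c cin] := implyP (C2 _ mS) hnd.
  rewrite -sub_setN_mask => hsub.
  apply: (indep3 (Hc c cin)) hl.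
  exact: subset_trans hsub (setN3_sub _ _ _).
- move=> hd; have := implyP (C1 _ mS) hd; case/orP => [h4|/hasP [t tin ht]].
  + by apply: ge4; rewrite card_mask7.
  + apply: (lin_dep_mono (setN_sub_mask ht)); exact: Hds.
Qed.

Lemma realize2 (dep : matroid7) (DB : seq bool -> bool) (certs : seq (nat * nat))
   (z : v3 C) (g : conf R) :
  (forall S, dep S = DB (mask7 S)) ->
  all (fun m => DB m ==> (2 < count id m)%N) allmasks ->
  all (fun m => ~~ DB m ==> has (fun c => subm m [:: c.1; c.2]) certs) allmasks ->
  (forall a b c, a != b -> a != c -> b != c -> det3 (rowv g a) (rowv g b) (rowv g c) = 0) ->
  (forall c, c \in certs -> det3 (crow g c.1) (crow g c.2) z != 0) ->
  is_realization dep g.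
Proof.
move=> Hdep /allP C1 /allP C2 H3 Hc S; rewrite Hdep.
have mS := allmasksP (mask7_size S).
split.
- move=> hl; apply/negPn/negP => hnd.
  have /hasP [c cin] := implyP (C2 _ mS) hnd.
  rewrite -sub_setN_mask => hsub.
  apply: (indep2 (Hc c cin)) hl.
  exact: subset_trans hsub (setN2_sub _ _).
- move=> hd; have := implyP (C1 _ mS) hd; rewrite -card_mask7 => h3.
  have [a aS] : exists a, a \in S by apply/card_gt0P; apply: leq_trans h3.
  have h1 : (1 < #|S :\ a|)%N by move: h3; rewrite (cardsD1 a S) aS.
  have [b bS] : exists b, b \in S :\ a by apply/card_gt0P; apply: leq_trans h1.
  have h2 : (0 < #|S :\ a :\ b|)%N by move: h1; rewrite (cardsD1 b (S :\ a)) bS.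
  have [d dS] : exists d, d \in S :\ a :\ b by apply/card_gt0P.
  move: bS dS; rewrite !inE => /andP [ba bS] /andP [db /andP [da dS]].
  have sub : [set a; b; d] \subset S.
    by apply/subsetP => x; rewrite !inE => /orP [/orP []|] /eqP ->.
  apply: (lin_dep_mono sub); apply: dep3; rewrite 1?eq_sym //.
  by apply: H3; rewrite eq_sym.
Qed.
End Realize.
Lemma eq_inord7 (x : 'I_7) k : (k < 7)%N -> (x == inord k) = (val x == k).
Proof. by move=> h; rewrite -val_eqE /= inordK. Qed.

Lemma inord7_eq i j : (i < 7)%N -> (j < 7)%N -> ((inord i : 'I_7) == inord j) = (i == j).
Proof. by move=> hi hj; rewrite eq_inord7 // val_inord7. Qed.

Definition Nl : seq (seq nat) := [:: [:: 2;3;5]; [:: 1;5;6]; [:: 0;4;5]; [:: 1;2;4]; [:: 0;3;6]].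

Lemma setN3E a b c : (a < 7)%N -> (b < 7)%N -> (c < 7)%N ->
  setN [:: a; b; c] = [set (inord a : 'I_7); inord b; inord c].
Proof.
move=> ha hb hc; apply/setP => x; rewrite !inE !eq_inord7 //.
by rewrite orbA.
Qed.

Lemma N_lines_eq : N_lines = map setN Nl.
Proof. by rewrite /N_lines /Nl /= !setN3E. Qed.

Definition DBN (m : seq bool) : bool :=
  (3 < count id m)%N || ((count id m == 3) && has (fun l => subm m l) Nl).

Lemma N_depE S : N_dep S = DBN (mask7 S).
Proof.
rewrite /N_dep /plc_dep /DBN N_lines_eq has_map card_mask7; congr (_ || (_ && _)).
by apply: eq_has => l; rewrite /= sub_setN_mask.
Qed.

Definition DBU (m : seq bool) : bool := (2 < count id m)%N.
Lemma U27_depE S : U27_dep S = DBU (mask7 S).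
Proof. by rewrite /U27_dep /DBU card_mask7. Qed.

Lemma N_dep_mono (S T : {set 'I_7}) : S \subset T -> N_dep S -> N_dep T.
Proof.
move=> ST; rewrite /N_dep /plc_dep => /orP [h|/andP [/eqP h3 hl]].
- by rewrite (leq_trans h (subset_leq_card ST)).
- case: (ltnP 3 #|T|) => [//|hT].
  have e : S = T.
    apply/eqP; rewrite eqEcard ST /= h3; exact: hT.
  by rewrite -e h3 eqxx hl orbT.
Qed.

Lemma N6_depE S : N6_dep S = (el 6 \in S) || N_dep (S :\ el 6).
Proof.
apply/idP/idP.
- move=> /existsP [C /andP [/orP [/andP [/andP [hd _] h6]| /eqP ->] CS]].
  + apply/orP; right; apply: (N_dep_mono _ hd); apply/subsetP => x xC.
    rewrite !inE (subsetP CS _ xC) andbT; apply: contraNneq h6 => <-; exact: xC.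
  + by rewrite sub1set in CS; rewrite CS.
- case/orP => [h6|hd].
  + by apply/existsP; exists [set el 6]; rewrite eqxx orbT sub1set h6.
  + pose P := fun C : {set 'I_7} => N_dep C && (C \subset S :\ el 6).
    have [C /minsetP [/andP [CD CS] Cmin]] : {C | minset P C}.
      by apply: ex_minset; exists (S :\ el 6); rewrite /P hd subxx.
    apply/existsP; exists C; apply/andP; split; last first.
      by apply: subset_trans CS (subsetDl _ _).
    apply/orP; left; apply/andP; split; last first.
      by apply/negP => h6; have := subsetP CS _ h6; rewrite !inE eqxx.
    apply/andP; split => //; apply/forallP => D; apply/implyP => /properP [DC [x xC xD]].
    apply/negP => hD.
    have e := Cmin D (introT andP (conj hD (subset_trans DC CS))) DC.
    by rewrite e xC in xD.
Qed.
Definition certsN : seq (nat*nat*nat) := [:: (0,1,2); (0,1,3); (0,1,4); (0,1,5); (0,1,6); (0,2,3); (0,2,4); (0,2,5); (0,2,6); (0,3,4); (0,3,5); (0,4,6); (0,5,6); (1,2,3); (1,2,5); (1,2,6); (1,3,4); (1,3,5); (1,3,6); (1,4,5); (1,4,6); (2,3,4); (2,3,6); (2,4,5); (2,4,6); (2,5,6); (3,4,5); (3,4,6); (3,5,6); (4,5,6)].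
Definition certs6 : seq (nat*nat*nat) := [:: (0,1,2); (0,1,3); (0,1,4); (0,1,6); (0,2,3); (0,2,4); (0,2,6); (0,3,4); (0,4,6); (1,2,3); (1,2,6); (1,3,4); (1,3,6); (1,4,6); (2,3,4); (2,3,6); (2,4,6); (3,4,6)].
Definition certsU : seq (nat*nat) := [:: (0,1); (0,2); (0,3); (0,4); (0,5); (0,6); (1,2); (1,3); (1,4); (1,5); (1,6); (2,3); (2,4); (2,5); (2,6); (3,4); (3,5); (3,6); (4,5); (4,6); (5,6)].
Lemma mask7_D6 (S : {set 'I_7}) : mask7 (S :\ el 6) = set_nth false (mask7 S) 5 false.
Proof.
apply: (@eq_from_nth _ false); first by rewrite size_set_nth !mask7_size.
move=> k; rewrite mask7_size => k7; rewrite nth_set_nth /= !mask7_nth // !inE.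
rewrite /el /= inord7_eq //.
by case: (k == 5).
Qed.

Definition DB6 (m : seq bool) : bool := nth false m 5 || DBN (set_nth false m 5 false).
Lemma N6_depE' S : N6_dep S = DB6 (mask7 S).
Proof. by rewrite N6_depE N_depE mask7_D6 /DB6 mask7_nth. Qed.

Definition Nl6 : seq (seq nat) := [:: [:: 5]; [:: 1;2;4]; [:: 0;3;6]].

Lemma checkN1 : all (fun m => DBN m ==> ((3 < count id m)%N || has (fun t => all (fun k => nth false m k) t) Nl)) allmasks.
Proof. by vm_compute. Qed.
Lemma checkN2 : all (fun m => ~~ DBN m ==> has (fun c => subm m [:: c.1.1; c.1.2; c.2]) certsN) allmasks.
Proof. by vm_compute. Qed.
Lemma check61 : all (fun m => DB6 m ==> ((3 < count id m)%N || has (fun t => all (fun k => nth false m k) t) Nl6)) allmasks.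
Proof. by vm_compute. Qed.
Lemma check62 : all (fun m => ~~ DB6 m ==> has (fun c => subm m [:: c.1.1; c.1.2; c.2]) certs6) allmasks.
Proof. by vm_compute. Qed.
Lemma checkU1 : all (fun m => DBU m ==> (2 < count id m)%N) allmasks.
Proof. by vm_compute. Qed.
Lemma checkU2 : all (fun m => ~~ DBU m ==> has (fun c => subm m [:: c.1; c.2]) certsU) allmasks.
Proof. by vm_compute. Qed.
Section RealConcrete.
Variable R : realType.
Local Notation C := (R[i]).
Implicit Types g : conf R.

Definition ldet g (t : seq nat) := det3 (crow g (nth 0 t 0)) (crow g (nth 0 t 1)) (crow g (nth 0 t 2)).

Lemma dep_line g t : (size t == 3) && all (fun k => k < 7)%N t && uniq t ->
  ldet g t = 0 -> lin_dep g (setN t).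
Proof.
case: t => [|a [|b [|c [|? ?]]]] //=; rewrite !andbT => /andP [/andP [a7 /andP [b7 c7]]].
rewrite !inE negb_or => /andP [/andP [ab ac] bc] hd.
rewrite setN3E //; apply: dep3; rewrite ?inord7_eq //.
Qed.

Lemma Nl_ok : all (fun t => (size t == 3) && all (fun k => k < 7)%N t && uniq t) Nl.
Proof. by vm_compute. Qed.

Lemma realN g : (forall t, t \in Nl -> ldet g t = 0) ->
  (forall c, c \in certsN -> det3 (crow g c.1.1) (crow g c.1.2) (crow g c.2) != 0) ->
  is_realization N_dep g.
Proof.
move=> Hl Hc; apply: (realize N_depE checkN1 checkN2 _ Hc) => t ht.
by apply: dep_line; [exact: (allP Nl_ok) | exact: Hl].
Qed.

Lemma realN6 g : crow g 5 = v0 C -> ldet g [:: 1;2;4] = 0 -> ldet g [:: 0;3;6] = 0 ->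
  (forall c, c \in certs6 -> det3 (crow g c.1.1) (crow g c.1.2) (crow g c.2) != 0) ->
  is_realization N6_dep g.
Proof.
move=> H5 H1 H2 Hc; apply: (realize N6_depE' check61 check62 _ Hc) => t.
rewrite !inE => /orP [/eqP ->|/orP [/eqP ->|/eqP ->]].
- have -> : setN [:: 5] = [set inord 5] by apply/setP => x; rewrite !inE eq_inord7.
  exact: dep1.
- by apply: dep_line.
- by apply: dep_line.
Qed.

Lemma realU g z : (forall a b c, a != b -> a != c -> b != c -> det3 (rowv g a) (rowv g b) (rowv g c) = 0) ->
  (forall c, c \in certsU -> det3 (crow g c.1) (crow g c.2) z != 0) ->
  is_realization U27_dep g.
Proof. by move=> H3 Hc; apply: (realize2 U27_depE checkU1 checkU2 H3 Hc). Qed.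
End RealConcrete.
(* ---------- Zariski closure via polynomial curves ---------- *)
Definition gcomp (T : Type) (u : T * T * T) (j : 'I_3) : T :=
  match val j with 0 => u.1.1 | 1 => u.1.2 | _ => u.2 end.

Section Closure.
Variable R : realType.
Local Notation C := (R[i]).

Lemma poly_all0 (p : {poly C}) : (forall x, x != 0 -> p.[x] = 0) -> p = 0.
Proof.
move=> H; apply: (@roots_geq_poly_eq0 _ p [seq (k.+1)%:R | k <- iota 0 (size p)]).
- apply/allP => x /mapP [k _ ->]; apply/eqP/H; by rewrite pnatr_eq0.
- rewrite map_inj_uniq ?iota_uniq // => a b /eqP; rewrite eqr_nat eqSS => /eqP.
  by [].
- by rewrite size_map size_iota.
Qed.

Definition polyconf (G : 'I_7 -> v3 {poly C}) : 'M[{poly C}]_(7, 3) :=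
  \matrix_(i, j) gcomp (G i) j.
Definition evalc (G : 'I_7 -> v3 {poly C}) (s : C) : 'I_7 -> v3 C :=
  fun i => vmap (fun p => p.[s]) (G i).

Lemma polyconf_eval G s : map_mx (fun p => p.[s]) (polyconf G) = mkconf (evalc G s).
Proof.
apply/matrixP => i j; rewrite !mxE /gcomp /comp /evalc /vmap /vx /vy /vz /=.
by case: (val j) => [|[|]].
Qed.

Lemma curve_closure (A : conf R -> Prop) (G : 'I_7 -> v3 {poly C}) (D : {poly C}) :
  D != 0 -> (forall s, D.[s] != 0 -> zariski_closure A (mkconf (evalc G s))) ->
  zariski_closure A (mkconf (evalc G 0)).
Proof.
move=> Dn H p Hp.
pose P := polyconf G.
pose q := \sum_(m <- mpoly.msupp p) (mpoly.mcoeff m p)%:P * \prod_(k < 7 * 3) (mxvec P 0 k) ^+ (mpoly.fun_of_multinom m k).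
have qE : forall s, q.[s] = mpoly.meval (coords (mkconf (evalc G s))) p.
  move=> s; rewrite mpoly.mevalE horner_sum; apply: eq_bigr => m _.
  rewrite hornerM hornerC horner_prod; congr (_ * _); apply: eq_bigr => k _.
  rewrite horner_exp /coords -polyconf_eval -map_mxvec mxE //.
have q0 : q * D = 0.
  apply: poly_all0 => s _; rewrite hornerM.
  case: (eqVneq D.[s] 0) => [->|hD]; first by rewrite mulr0.
  by rewrite qE (H s hD p Hp) mul0r.
move/eqP: q0; rewrite mulf_eq0 (negbTE Dn) orbF => /eqP q0.
by rewrite -qE q0 horner0.
Qed.

Lemma closure_idem (A : conf R -> Prop) g :
  zariski_closure (zariski_closure A) g -> zariski_closure A g.
Proof. move=> H p Hp; apply: H => h hA; exact: hA. Qed.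

Lemma closure_sub (A : conf R -> Prop) g : A g -> zariski_closure A g.
Proof. by move=> hA p Hp; apply: Hp. Qed.
End Closure.
Definition chartT := forall T : comNzRingType, (nat -> T) -> nat -> v3 T.

Definition zc (T : comNzRingType) : v3 T := (1, 1 + 1, 0).

Definition cdet (T : comNzRingType) (rows : nat -> v3 T) (c : nat * nat * option nat) : T :=
  det3 (rows c.1.1) (rows c.1.2) (match c.2 with Some k => rows k | None => zc T end).

Definition cdeg (d : nat -> nat) (c : nat * nat * option nat) : nat :=
  (d c.1.1 + d c.1.2 + match c.2 with Some k => d k | None => 0 end)%N.


Definition ringmor (T1 T2 : comNzRingType) (f : T1 -> T2) :=
  [/\ forall x y : T1, f (x + y) = f x + f y, forall x : T1, f (- x) = - f x,
      forall x y : T1, f (x * y) = f x * f y, f 1 = 1 & f 0 = 0].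

Lemma ringmor_det3 (T1 T2 : comNzRingType) (f : T1 -> T2) (u v w : v3 T1) : ringmor f ->
  f (det3 u v w) = det3 (vmap f u) (vmap f v) (vmap f w).
Proof.
case=> fD fN fM f1 f0; vdestr; rewrite /det3 /dot /cross /vmap /vx /vy /vz /=.
by rewrite !(fD, fN, fM).
Qed.

Lemma cdet_map (T1 T2 : comNzRingType) (f : T1 -> T2) rows c : ringmor f ->
  f (cdet rows c) = cdet (fun n => vmap f (rows n)) c.
Proof.
move=> hf; rewrite /cdet ringmor_det3 //; case: c.2 => // .
by case: hf => fD fN fM f1 f0; rewrite /zc /vmap /vx /vy /vz /= fD f1 f0.
Qed.

Section MorInst.
Variable R : realType.
Local Notation C := (R[i]).
Lemma ringmor_horner (s : C) : ringmor (fun p : {poly C} => p.[s]).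
Proof. by split => *; rewrite !hornerE. Qed.
Lemma ringmor_intr : ringmor (fun x : int => (x%:~R : C)).
Proof. by split => *; rewrite ?intrD ?intrM ?intrN. Qed.
End MorInst.

Lemma cdet_scale (T : comNzRingType) (d : nat -> nat) (s : T) rows c :
  cdet (fun n => vsc (s ^+ d n) (rows n)) c = s ^+ cdeg d c * cdet rows c.
Proof.
rewrite /cdet /cdeg; case: c.2 => [k|]; rewrite !exprD; vdestr; rewrite /zc /det3 /dot /cross /vsc /vx /vy /vz /=; ring.
Qed.
Section ChartClosure.
Variable R : realType.
Local Notation C := (R[i]).

Lemma chart_closure (dep : matroid7) (F : chartT) (d : nat -> nat)
  (certs : seq (nat * nat * option nat)) (th1 : nat -> int) :
  (forall (T1 T2 : comNzRingType) (f : T1 -> T2), ringmor f ->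
      forall th n, F T2 (fun j => f (th j)) n = vmap f (F T1 th n)) ->
  (forall (T : comNzRingType) th (s : T) n, F T (fun j => s * th j) n = vsc (s ^+ d n) (F T th n)) ->
  (forall th : nat -> C, (forall c, c \in certs -> cdet (F C th) c != 0) ->
      is_realization dep (mkconf (fun i => F C th (val i)))) ->
  all (fun c => cdet (F int th1) c != 0) certs ->
  forall th0 : nat -> C, V dep (mkconf (fun i => F C th0 (val i))).
Proof.
move=> Hm Hh Hr Hc th0.
pose t1 := fun j => ((th1 j)%:~R : C).
pose thP := fun j => (th0 j)%:P + 'X * (t1 j)%:P.
pose thQ := fun j => (t1 j)%:P + 'X * (th0 j)%:P.
have evP : forall s n, vmap (fun p => p.[s]) (F _ thP n) = F C (fun j => th0 j + s * t1 j) n.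
  move=> s n; rewrite -(Hm _ _ _ (ringmor_horner s)); congr (F C _ n).
  by apply: functional_extensionality => j; rewrite /thP !hornerE mulrC.
have evQ : forall s n, vmap (fun p => p.[s]) (F _ thQ n) = F C (fun j => t1 j + s * th0 j) n.
  move=> s n; rewrite -(Hm _ _ _ (ringmor_horner s)); congr (F C _ n).
  by apply: functional_extensionality => j; rewrite /thQ !hornerE mulrC.
pose Fc := fun c => cdet (F _ thP) c.
have FcE : forall c s, (Fc c).[s] = cdet (F C (fun j => th0 j + s * t1 j)) c.
  move=> c s; rewrite /Fc (cdet_map _ _ (ringmor_horner s)); congr cdet.
  by apply: functional_extensionality => n; exact: evP.
have Fcn : forall c, c \in certs -> Fc c != 0.
  move=> c cin; apply/negP => /eqP Fc0.
  pose Gc := cdet (F _ thQ) c.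
  have G0 : Gc = 0.
    apply: poly_all0 => u un.
    rewrite /Gc (cdet_map _ _ (ringmor_horner u)).
    have -> : (fun n => vmap (fun p => p.[u]) (F _ thQ n)) =
              (fun n => vsc (u ^+ d n) (F C (fun j => th0 j + u^-1 * t1 j) n)).
      apply: functional_extensionality => n; rewrite evQ -Hh; congr (F C _ n).
      apply: functional_extensionality => j.
      by rewrite mulrDr mulrA mulfV // mul1r addrC.
    by rewrite cdet_scale -FcE Fc0 horner0 mulr0.
  have : Gc.[0] != 0.
    rewrite /Gc (cdet_map _ _ (ringmor_horner 0)).
    have -> : (fun n => vmap (fun p => p.[0]) (F _ thQ n)) =
              (fun n => vmap (fun x : int => (x%:~R : C)) (F _ th1 n)).
      apply: functional_extensionality => n; rewrite evQ -(Hm _ _ _ (@ringmor_intr R)).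
      congr (F C _ n); apply: functional_extensionality => j.
      by rewrite mul0r addr0.
    rewrite -(cdet_map _ _ (@ringmor_intr R)) intr_eq0.
    exact: (allP Hc c cin).
  by rewrite G0 horner0 eqxx.
pose D := \prod_(c <- certs) Fc c.
have Dn : D != 0 by rewrite prodf_seq_neq0; apply/allP => c cin; rewrite Fcn.
have ev : forall s, mkconf (evalc (fun i => F _ thP (val i)) s) =
                    mkconf (fun i => F C (fun j => th0 j + s * t1 j) (val i)).
  by move=> s; congr mkconf; apply: functional_extensionality => i; rewrite /evalc evP.
have := curve_closure (G := fun i => F _ thP (val i)) Dn.
rewrite ev.
have -> : (fun j => th0 j + 0 * t1 j) = th0.
  by apply: functional_extensionality => j; rewrite mul0r addr0.
apply => s Ds; rewrite ev; apply: closure_sub; apply: Hr => c cin.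
rewrite -FcE; move: Ds; rewrite /D horner_prod prodf_seq_neq0 => /allP /(_ c cin).
by [].
Qed.
End ChartClosure.
Section VecMor.
Variables (T1 T2 : comNzRingType) (f : T1 -> T2).
Hypothesis hf : ringmor f.
Lemma vmap_cross u v : vmap f (cross u v) = cross (vmap f u) (vmap f v).
Proof. case: hf => fD fN fM f1 f0; vdestr; rewrite /cross /vmap /vx /vy /vz /=; by rewrite !(fD, fN, fM). Qed.
Lemma vmap_vsc a u : vmap f (vsc a u) = vsc (f a) (vmap f u).
Proof. case: hf => fD fN fM f1 f0; vdestr; rewrite /vsc /vmap /vx /vy /vz /=; by rewrite !(fD, fN, fM). Qed.
Lemma vmap_v0 : vmap f (v0 T1) = v0 T2.
Proof. by case: hf => fD fN fM f1 f0; rewrite /vmap /v0 /vx /vy /vz /= f0. Qed.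
End VecMor.

Definition pv (T : comNzRingType) (th : nat -> T) (k : nat) : v3 T := (th k, th k.+1, th k.+2).

Lemma pv_map (T1 T2 : comNzRingType) (f : T1 -> T2) th k : pv (fun j => f (th j)) k = vmap f (pv th k).
Proof. by []. Qed.
Lemma pv_sc (T : comNzRingType) (th : nat -> T) s k : pv (fun j => s * th j) k = vsc s (pv th k).
Proof. by []. Qed.

Definition chU : chartT := fun T th n =>
  if (n < 7)%N then cross (pv th 0) (pv th (3 + 3 * n)) else v0 T.
Arguments chU : clear implicits.

Lemma chU_mor : forall (T1 T2 : comNzRingType) (f : T1 -> T2), ringmor f ->
      forall th n, chU T2 (fun j => f (th j)) n = vmap f (chU T1 th n).
Proof. move=> T1 T2 f hf th n; rewrite /chU; case: (n < 7)%N; by rewrite ?vmap_cross ?vmap_v0. Qed.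

Lemma chU_hom : forall (T : comNzRingType) th (s : T) n,
  chU T (fun j => s * th j) n = vsc (s ^+ 2) (chU T th n).
Proof. move=> T th s n; rewrite /chU !pv_sc; case: (n < 7)%N; vring. Qed.

Definition ch6 : chartT := fun T th n =>
  match n with
  | 1 | 2 | 4 => cross (pv th 0) (pv th (6 + 3 * n))
  | 0 | 3 | 6 => cross (pv th 3) (pv th (6 + 3 * n))
  | _ => v0 T end.
Arguments ch6 : clear implicits.

Lemma ch6_mor : forall (T1 T2 : comNzRingType) (f : T1 -> T2), ringmor f ->
      forall th n, ch6 T2 (fun j => f (th j)) n = vmap f (ch6 T1 th n).
Proof.
move=> T1 T2 f hf th n; rewrite /ch6.
by case: n => [|[|[|[|[|[|[|n]]]]]]]; rewrite ?vmap_cross ?vmap_v0.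
Qed.

Lemma ch6_hom : forall (T : comNzRingType) th (s : T) n,
  ch6 T (fun j => s * th j) n = vsc (s ^+ 2) (ch6 T th n).
Proof. move=> T th s n; rewrite /ch6 !pv_sc; case: n => [|[|[|[|[|[|[|n]]]]]]]; vring. Qed.
Definition pairrows (T : comNzRingType) (O n1 n2 y : v3 T) (lam : T) (b : bool) : v3 T * v3 T :=
  if b then (cross n1 y, cross n2 (vsc lam (cross O (cross n1 y))))
  else (cross n1 (vsc lam (cross O (cross n2 y))), cross n2 y).

Definition chN (bA bB bC : bool) : chartT := fun T th n =>
  let O := pv th 0 in let n1 := pv th 3 in let n2 := pv th 6 in
  let pA := pairrows O n1 n2 (pv th 9) (th 18) bA in
  let pB := pairrows O n1 n2 (pv th 12) (th 19) bB in
  let pC := pairrows O n1 n2 (pv th 15) (th 20) bC in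
  match n with
  | 0 => pC.2 | 1 => pB.1 | 2 => pA.1 | 3 => pA.2 | 4 => pC.1 | 5 => O | 6 => pB.2
  | _ => v0 T end.
Arguments chN : clear implicits.

Definition dN (bA bB bC : bool) (n : nat) : nat :=
  match n with
  | 0 => if bC then 5 else 2 | 1 => if bB then 2 else 5 | 2 => if bA then 2 else 5
  | 3 => if bA then 5 else 2 | 4 => if bC then 2 else 5 | 5 => 1 | 6 => if bB then 5 else 2
  | _ => 0 end.

Lemma pairrows_mor (T1 T2 : comNzRingType) (f : T1 -> T2) O n1 n2 y lam b : ringmor f ->
  pairrows (vmap f O) (vmap f n1) (vmap f n2) (vmap f y) (f lam) b =
  (vmap f (pairrows O n1 n2 y lam b).1, vmap f (pairrows O n1 n2 y lam b).2).
Proof. by move=> hf; case: b; rewrite /pairrows /= ?(vmap_cross hf, vmap_vsc hf). Qed.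

Lemma pairrows_hom (T : comNzRingType) (s : T) O n1 n2 y lam b :
  pairrows (vsc s O) (vsc s n1) (vsc s n2) (vsc s y) (s * lam) b =
  (vsc (s ^+ (if b then 2 else 5)) (pairrows O n1 n2 y lam b).1,
   vsc (s ^+ (if b then 5 else 2)) (pairrows O n1 n2 y lam b).2).
Proof. case: b; rewrite /pairrows /=; congr (_, _); vring. Qed.

Lemma chN_mor bA bB bC : forall (T1 T2 : comNzRingType) (f : T1 -> T2), ringmor f ->
      forall th n, chN bA bB bC T2 (fun j => f (th j)) n = vmap f (chN bA bB bC T1 th n).
Proof.
move=> T1 T2 f hf th n; rewrite /chN !pv_map !(pairrows_mor _ _ _ _ _ _ hf).
by case: n => [|[|[|[|[|[|[|n]]]]]]] //=; rewrite (vmap_v0 hf).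
Qed.

Lemma chN_hom bA bB bC : forall (T : comNzRingType) th (s : T) n,
  chN bA bB bC T (fun j => s * th j) n = vsc (s ^+ dN bA bB bC n) (chN bA bB bC T th n).
Proof.
move=> T th s n; rewrite /chN !pv_sc !pairrows_hom.
case: n => [|[|[|[|[|[|[|n]]]]]]] /=; rewrite ?expr1 //; vring.
Qed.
Definition certsNc : seq (nat * nat * option nat) := [seq (t.1.1, t.1.2, Some t.2) | t <- certsN].
Definition th1N (j : nat) : int :=
  nth 0 [:: 0;0;1; 0;2;1; 2;1;1; -2;2;0; 0;-1;0; 1;0;0; 1;1;1]%R j.
Lemma checkN_num bA bB bC : all (fun c => cdet (chN bA bB bC int th1N) c != 0) certsNc.
Proof. by case: bA; case: bB; case: bC; vm_compute. Qed.
Definition certs6c : seq (nat * nat * option nat) := [seq (t.1.1, t.1.2, Some t.2) | t <- certs6].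
Definition th16 (j : nat) : int :=
  nth 0 [:: -1;-2;-1; 0;1;-1; 1;2;-1; -2;-2;0; -2;-2;-1; 0;0;-1; 0;-1;0; 0;0;0; 1;2;0]%R j.
Lemma check6_num : all (fun c => cdet (ch6 int th16) c != 0) certs6c.
Proof. by vm_compute. Qed.
Definition certsUc : seq (nat * nat * option nat) := [seq (t.1, t.2, None) | t <- certsU].
Definition th1U (j : nat) : int :=
  nth 0 [:: 1;0;-1; -2;0;1; -1;-1;-1; -2;1;1; 2;-2;-2; -1;1;2; 0;1;-2; 1;1;2]%R j.
Lemma checkU_num : all (fun c => cdet (chU int th1U) c != 0) certsUc.
Proof. by vm_compute. Qed.

Lemma certsN_lt : all (fun c => [&& c.1.1 < 7, c.1.2 < 7 & c.2 < 7])%N certsN.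
Proof. by vm_compute. Qed.
Lemma certs6_lt : all (fun c => [&& c.1.1 < 7, c.1.2 < 7 & c.2 < 7])%N certs6.
Proof. by vm_compute. Qed.
Lemma certsU_lt : all (fun c => (c.1 < 7) && (c.2 < 7))%N certsU.
Proof. by vm_compute. Qed.

Section ChartReal.
Variable R : realType.
Local Notation C := (R[i]).

Lemma crow_mk (h : nat -> v3 C) k : (k < 7)%N -> crow (mkconf (fun i => h (val i))) k = h k.
Proof. by move=> hk; rewrite /crow rowv_mkconf val_inord7. Qed.

Lemma det3_swap23 (u v w : v3 C) : det3 u w v = - det3 u v w. Proof. vring. Qed.
Lemma det3_swap12 (u v w : v3 C) : det3 v u w = - det3 u v w. Proof. vring. Qed.

Lemma pair_line (O n1 n2 y : v3 C) lam b :
  det3 (pairrows O n1 n2 y lam b).1 (pairrows O n1 n2 y lam b).2 O = 0.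
Proof. case: b; rewrite /pairrows /=; vring. Qed.
Lemma pair1 (O n1 n2 y : v3 C) lam b :
  (pairrows O n1 n2 y lam b).1 = cross n1 (if b then y else vsc lam (cross O (cross n2 y))).
Proof. by case: b. Qed.
Lemma pair2 (O n1 n2 y : v3 C) lam b :
  (pairrows O n1 n2 y lam b).2 = cross n2 (if b then vsc lam (cross O (cross n1 y)) else y).
Proof. by case: b. Qed.

Lemma chN_real bA bB bC (th : nat -> C) :
  (forall c, c \in certsNc -> cdet (chN bA bB bC C th) c != 0) ->
  is_realization N_dep (mkconf (fun i => chN bA bB bC C th (val i))).
Proof.
move=> Hc; apply: realN.
- move=> t; rewrite !inE => /orP [/eqP ->|/orP [/eqP ->|/orP [/eqP ->|/orP [/eqP ->|/eqP ->]]]];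
  rewrite /ldet /= !crow_mk // /chN /=.
  + exact: pair_line.
  + by rewrite det3_swap23 pair_line oppr0.
  + by rewrite det3_swap12 pair_line oppr0.
  + by rewrite !pair1 det3_cross_zero.
  + by rewrite !pair2 det3_cross_zero.
- move=> c cin; have := Hc _ (map_f (fun t => (t.1.1, t.1.2, Some t.2)) cin).
  have /and3P [h1 h2 h3] := allP certsN_lt c cin.
  by rewrite /cdet /= !crow_mk.
Qed.

Lemma ch6_real (th : nat -> C) :
  (forall c, c \in certs6c -> cdet (ch6 C th) c != 0) ->
  is_realization N6_dep (mkconf (fun i => ch6 C th (val i))).
Proof.
move=> Hc; apply: realN6.
- by rewrite crow_mk.
- by rewrite /ldet /= !crow_mk // /ch6 /= det3_cross_zero.
- by rewrite /ldet /= !crow_mk // /ch6 /= det3_cross_zero.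
- move=> c cin; have := Hc _ (map_f (fun t => (t.1.1, t.1.2, Some t.2)) cin).
  have /and3P [h1 h2 h3] := allP certs6_lt c cin.
  by rewrite /cdet /= !crow_mk.
Qed.

Lemma chU_real (th : nat -> C) :
  (forall c, c \in certsUc -> cdet (chU C th) c != 0) ->
  is_realization U27_dep (mkconf (fun i => chU C th (val i))).
Proof.
move=> Hc; apply: (realU (z := zc C)).
- move=> a b c _ _ _; rewrite !rowv_mkconf /chU !ltn_ord det3_cross_zero //.
- move=> c cin; have := Hc _ (map_f (fun t => (t.1, t.2, None)) cin).
  have /andP [h1 h2] := allP certsU_lt c cin.
  by rewrite /cdet /= !crow_mk.
Qed.

Lemma V_chN bA bB bC (th0 : nat -> C) : V N_dep (mkconf (fun i => chN bA bB bC C th0 (val i))).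
Proof.
exact: (chart_closure (chN_mor bA bB bC) (chN_hom bA bB bC) (@chN_real bA bB bC) (checkN_num bA bB bC)).
Qed.
Lemma V_ch6 (th0 : nat -> C) : V N6_dep (mkconf (fun i => ch6 C th0 (val i))).
Proof. exact: (chart_closure ch6_mor ch6_hom ch6_real check6_num). Qed.
Lemma V_chU (th0 : nat -> C) : V U27_dep (mkconf (fun i => chU C th0 (val i))).
Proof. exact: (chart_closure chU_mor chU_hom chU_real checkU_num). Qed.
End ChartReal.
Definition mkt (t : seq nat) : seq bool := [seq k \in t | k <- iota 0 7].

Lemma mask7_setN t : mask7 (setN t) = mkt t.
Proof.
rewrite /mask7 /mkt; apply/eq_in_map => k; rewrite mem_iota add0n => /andP [_ k7].
by rewrite inE val_inord7.
Qed.

Lemma Nl_dep : all (fun t => [&& DBN (mkt t), DBU (mkt t) & DB6 (mkt t)]) Nl.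
Proof. by vm_compute. Qed.

Section CVclosed.
Variable R : realType.
Local Notation C := (R[i]).
Implicit Types g : conf R.

Lemma Nl_depN t : t \in Nl -> N_dep (setN t).
Proof. by move=> tin; rewrite N_depE mask7_setN; case/and3P: (allP Nl_dep t tin). Qed.
Lemma Nl_depU t : t \in Nl -> U27_dep (setN t).
Proof. by move=> tin; rewrite U27_depE mask7_setN; case/and3P: (allP Nl_dep t tin). Qed.
Lemma Nl_dep6 t : t \in Nl -> N6_dep (setN t).
Proof. by move=> tin; rewrite N6_depE' mask7_setN; case/and3P: (allP Nl_dep t tin). Qed.

Lemma CV_of_dets g : (forall t, t \in Nl -> ldet g t = 0) -> circuit_variety N_dep g.
Proof.
move=> Hl S; rewrite N_depE => hd.
have := implyP ((allP checkN1) _ (allmasksP (mask7_size S))) hd.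
case/orP => [h4|/hasP [t tin ht]].
- by apply: ge4; rewrite card_mask7.
- apply: (lin_dep_mono (setN_sub_mask ht)); apply: dep_line; first exact: (allP Nl_ok).
  exact: Hl.
Qed.

Lemma dets_of_CV g : circuit_variety N_dep g -> forall t, t \in Nl -> ldet g t = 0.
Proof.
move=> H t tin; have := H (setN t) (Nl_depN tin); move: (allP Nl_ok t tin).
case: t tin => [|a [|b [|c [|? ?]]]] // tin /=; rewrite !andbT => /andP [/andP [a7 /andP [b7 c7]] _].
by rewrite setN3E // => /lin_dep_det.
Qed.

Definition mX (k : 'I_(7 * 3)) : mpoly.mpoly (7 * 3) C := @mpoly.mpolyX (7 * 3) C (mpoly.mnm1 k).
Definition pvar (k : nat) : v3 (mpoly.mpoly (7 * 3) C) :=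
  (mX (mxvec_index (inord k : 'I_7) i0), mX (mxvec_index (inord k : 'I_7) i1),
   mX (mxvec_index (inord k : 'I_7) i2)).
Definition detpoly (t : seq nat) := det3 (pvar (nth 0 t 0)) (pvar (nth 0 t 1)) (pvar (nth 0 t 2)).

Lemma ringmor_meval (v : 'I_(7 * 3) -> C) : ringmor (mpoly.meval v).
Proof. split => *; by rewrite ?mpoly.mevalD ?mpoly.mevalN ?mpoly.mevalM ?mpoly.meval1 ?mpoly.meval0. Qed.

Lemma meval_detpoly g t : mpoly.meval (coords g) (detpoly t) = ldet g t.
Proof.
rewrite /detpoly (ringmor_det3 _ _ _ (ringmor_meval _)) /ldet /crow /rowv /pvar /vmap /vx /vy /vz /=.
by rewrite /mX !mpoly.mevalXU /coords !mxvecE.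
Qed.

Lemma V_ldet (dep : matroid7) g t : (forall h : conf R, is_realization dep h -> ldet h t = 0) ->
  V dep g -> ldet g t = 0.
Proof.
move=> H hV; rewrite -meval_detpoly; apply: hV => h hr.
by rewrite meval_detpoly H.
Qed.

Lemma real_dets (dep : matroid7) (h : conf R) : (forall t, t \in Nl -> dep (setN t)) ->
  is_realization dep h -> forall t, t \in Nl -> ldet h t = 0.
Proof.
move=> Hd hr t tin; have := (hr (setN t)).2 (Hd t tin); move: (allP Nl_ok t tin).
case: t tin => [|a [|b [|c [|? ?]]]] // tin /=; rewrite !andbT => /andP [/andP [a7 /andP [b7 c7]] _].
by rewrite setN3E // => /lin_dep_det.
Qed.

Lemma V_CV (dep : matroid7) g : (forall t, t \in Nl -> dep (setN t)) ->
  V dep g -> circuit_variety N_dep g.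
Proof.
move=> Hd hV; apply: CV_of_dets => t tin; apply: (V_ldet _ hV) => h hr.
exact: (real_dets Hd hr).
Qed.

End CVclosed.
Section VecHelp.
Variable R : realType.
Local Notation C := (R[i]).
Implicit Types u v w x y n : v3 C.

Definition ev (k : nat) : v3 C := if k == 0 then (1, 0, 0) else if k == 1 then (0, 1, 0) else (0, 0, 1).

Lemma v3_neq0_ex u : u != v0 C -> exists2 k, (k < 3)%N & dot u (ev k) != 0.
Proof.
case/v3_neq0 => h; [exists 0|exists 1|exists 2] => //;
  by move: h; case: u => [[a b] c]; rewrite /dot /ev /vx /vy /vz /= !mulr0 ?mulr1 ?addr0 ?add0r.
Qed.

Lemma bac_cab n x e : cross n (cross x e) = vadd (vsc (dot n e) x) (vsc (- dot n x) e).
Proof. vring. Qed.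
Lemma cross_vsc n c x : cross n (vsc c x) = vsc c (cross n x).
Proof. vring. Qed.
Lemma dotC u v : dot u v = dot v u.
Proof. vring. Qed.

Lemma cross_surj n x : n != v0 C -> dot x n = 0 -> exists y, cross n y = x.
Proof.
move=> nn hx; have [k _ hk] := v3_neq0_ex nn.
exists (vsc (dot n (ev k))^-1 (cross x (ev k))).
rewrite cross_vsc bac_cab (dotC n x) hx oppr0.
move: hk; set d := dot n (ev k) => hk.
apply: vec_eqP; rewrite /vsc /vadd /vx /vy /vz /= !mul0r !addr0 mulrA mulVf // mul1r //.
Qed.

Lemma normal_exists u v w : det3 u v w = 0 ->
  exists n, [/\ n != v0 C, dot u n = 0, dot v n = 0 & dot w n = 0].
Proof.
move=> hd.
have hd' : det3 (vx u, vx v, vx w) (vy u, vy v, vy w) (vz u, vz v, vz w) = 0.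
  by rewrite -hd; vring.
have [ca [cb [cd [cn hc]]]] := dep3_vec hd'.
exists (ca, cb, cd); split.
- apply: contraNneq cn; rewrite /v0 => [[-> -> ->]]; by rewrite eqxx.
- by move: hc; rewrite /vadd /vsc /dot /vx /vy /vz /= => [[e1 e2 e3]]; rewrite -e1; ring.
- by move: hc; rewrite /vadd /vsc /dot /vx /vy /vz /= => [[e1 e2 e3]]; rewrite -e2; ring.
- by move: hc; rewrite /vadd /vsc /dot /vx /vy /vz /= => [[e1 e2 e3]]; rewrite -e3; ring.
Qed.

Lemma par_of_cross0 b P : P != v0 C -> cross b P = v0 C -> exists lam, b = vsc lam P.
Proof.
case: b => [[b1 b2] b3]; case: P => [[p1 p2] p3] hP.
rewrite /cross /v0 /vx /vy /vz /= => [[e1 e2 e3]].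
case/v3_neq0: hP; rewrite /vx /vy /vz /= => hk.
- exists (b1 / p1); apply: vec_eqP; rewrite /vsc /vx /vy /vz /=.
  + by rewrite mulfVK.
  + apply: (mulIf hk); rewrite mulrAC mulfVK //; apply/eqP; rewrite -subr_eq0; apply/eqP; lin0 e3.
  + apply: (mulIf hk); rewrite mulrAC mulfVK //; apply/eqP; rewrite -subr_eq0; apply/eqP; lin0 e2.
- exists (b2 / p2); apply: vec_eqP; rewrite /vsc /vx /vy /vz /=.
  + apply: (mulIf hk); rewrite mulrAC mulfVK //; apply/eqP; rewrite -subr_eq0; apply/eqP; lin0 e3.
  + by rewrite mulfVK.
  + apply: (mulIf hk); rewrite mulrAC mulfVK //; apply/eqP; rewrite -subr_eq0; apply/eqP; lin0 e1.
- exists (b3 / p3); apply: vec_eqP; rewrite /vsc /vx /vy /vz /=.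
  + apply: (mulIf hk); rewrite mulrAC mulfVK //; apply/eqP; rewrite -subr_eq0; apply/eqP; lin0 e2.
  + apply: (mulIf hk); rewrite mulrAC mulfVK //; apply/eqP; rewrite -subr_eq0; apply/eqP; lin0 e1.
  + by rewrite mulfVK.
Qed.

Lemma vsc_eq0 c u : vsc c u = v0 C -> c = 0 \/ u = v0 C.
Proof.
case: (eqVneq c 0) => [->|hc]; first by left.
move=> h; right; move: h; vdestr; rewrite /vsc /v0 /vx /vy /vz /= => [[e1 e2 e3]].
move/eqP: e1; move/eqP: e2; move/eqP: e3; rewrite !mulf_eq0 (negbTE hc) /= => /eqP -> /eqP -> /eqP ->.
by [].
Qed.

Lemma w_exists n1 n2 : cross n1 n2 != v0 C -> exists w, dot w n1 = 0 /\ dot w n2 != 0.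
Proof.
move=> hN; have [k _ hk] := v3_neq0_ex hN.
exists (cross n1 (ev k)); split; first by vring.
have -> : dot (cross n1 (ev k)) n2 = - dot (cross n1 n2) (ev k) by vring.
by rewrite oppr_eq0.
Qed.
End VecHelp.
Section PairLemma.
Variable R : realType.
Local Notation C := (R[i]).
Implicit Types u v w x y z n O : v3 C.

Definition Fgen (m1 m2 O x z : v3 C) :=
  exists y lam, x = cross m1 y /\ z = cross m2 (vsc lam (cross O (cross m1 y))).

Lemma id_crossP z m2 O x :
  cross z (cross m2 (cross O x)) = vadd (vsc (det3 x z O) m2) (vsc (- dot m2 z) (cross O x)).
Proof. vring. Qed.
Lemma id_PO m2 O x : cross (cross m2 (cross O x)) O = vsc (- dot m2 O) (cross x O).
Proof. vring. Qed.
Lemma id_cyc m2 x z O :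
  vadd (vadd (vsc (dot m2 x) (cross z O)) (vsc (dot m2 z) (cross O x))) (vsc (dot m2 O) (cross x z))
  = vsc (det3 x z O) m2.
Proof. vring. Qed.
Lemma id_xN x m1 m2 : cross x (cross m1 m2) = vadd (vsc (dot x m2) m1) (vsc (- dot x m1) m2).
Proof. vring. Qed.

Lemma vsc0 c : vsc c (v0 C) = v0 C. Proof. vring. Qed.
Lemma vadd0 u : vadd u (v0 C) = u. Proof. vring. Qed.
Lemma vsc0l u : vsc 0 u = v0 C. Proof. vring. Qed.
Lemma cross0r u : cross u (v0 C) = v0 C. Proof. vring. Qed.

Lemma G0 m1 m2 O x : m1 != v0 C -> dot x m1 = 0 -> Fgen m1 m2 O x (v0 C).
Proof.
move=> hm hx; have [y hy] := cross_surj hm hx.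
by exists y, 0; split; rewrite ?hy // vsc0l cross0r.
Qed.

Lemma Gproj m1 m2 O x z : dot O m2 != 0 -> cross x O != v0 C -> dot x m1 = 0 -> m1 != v0 C ->
  det3 x z O = 0 -> dot z m2 = 0 -> Fgen m1 m2 O x z.
Proof.
move=> hO hx hx1 hm hd hz.
have [y hy] := cross_surj hm hx1.
have hP : cross m2 (cross O x) != v0 C.
  apply/eqP => hP0; have := id_PO m2 O x; rewrite hP0.
  have -> : cross (v0 C) O = v0 C by vring.
  move/esym/vsc_eq0 => [/eqP|/eqP]; last by rewrite (negbTE hx).
  by rewrite oppr_eq0 dotC (negbTE hO).
have hc : cross z (cross m2 (cross O x)) = v0 C.
  by rewrite id_crossP hd (dotC m2 z) hz oppr0 !vsc0l; vring.
have [lam hl] := par_of_cross0 hP hc.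
by exists y, lam; split; rewrite ?hy // cross_vsc.
Qed.

Lemma GatO m1 m2 O x z c : z = vsc c O -> dot O m2 = 0 -> dot x m2 != 0 -> dot x m1 = 0 ->
  m1 != v0 C -> Fgen m1 m2 O x z.
Proof.
move=> -> hO hx2 hx1 hm; have [y hy] := cross_surj hm hx1.
exists y, (c / dot x m2); split; rewrite ?hy //; rewrite cross_vsc bac_cab.
rewrite (dotC m2 O) hO oppr0 vsc0l vadd0 (dotC m2 x).
by apply: vec_eqP; rewrite /vsc /vx /vy /vz /= mulrA mulfVK.
Qed.

Lemma par_O u O : O != v0 C -> cross u O = v0 C -> exists c, u = vsc c O.
Proof. exact: par_of_cross0. Qed.

Lemma GC3 m1 m2 O x z : O != v0 C -> dot O m1 = 0 -> dot O m2 = 0 -> cross m1 m2 != v0 C ->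
  cross x O != v0 C -> dot x m1 = 0 -> m1 != v0 C -> det3 x z O = 0 -> dot z m2 = 0 ->
  Fgen m1 m2 O x z.
Proof.
move=> On hO1 hO2 hN hx hx1 hm hd hz.
have hx2 : dot x m2 != 0.
  apply/eqP => hx2; move/eqP: hx; apply.
  have e1 : cross x (cross m1 m2) = v0 C by rewrite id_xN hx1 hx2 oppr0 !vsc0l; vring.
  have e2 : cross O (cross m1 m2) = v0 C by rewrite id_xN hO1 hO2 oppr0 !vsc0l; vring.
  have [a ha] := par_of_cross0 hN e1; have [b hb] := par_of_cross0 hN e2.
  by rewrite ha hb; vring.
have hzO : cross z O = v0 C.
  have := id_cyc m2 x z O; rewrite hd (dotC m2 z) hz (dotC m2 O) hO2 !vsc0l vadd0.
  have -> : vadd (vsc (dot m2 x) (cross z O)) (v0 C) = vsc (dot m2 x) (cross z O) by vring.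
  move=> h; have : vsc (dot m2 x) (cross z O) = v0 C by rewrite h; vring.
  by case/vsc_eq0 => // /eqP; rewrite dotC (negbTE hx2).
have [c hc] := par_O On hzO.
exact: GatO hc hO2 hx2 hx1 hm.
Qed.
End PairLemma.
Section PairLemma2.
Variable R : realType.
Local Notation C := (R[i]).
Implicit Types u v w x y z n O a b : v3 C.

Definition pconcl n1 n2 O a b :=
  exists wa wb, [/\ dot wa n1 = 0, dot wb n2 = 0,
     forall t, det3 (vadd a (vsc t wa)) (vadd b (vsc t wb)) O = 0 &
     forall t, t != 0 -> Fgen n1 n2 O (vadd a (vsc t wa)) (vadd b (vsc t wb)) \/
                         Fgen n2 n1 O (vadd b (vsc t wb)) (vadd a (vsc t wa))].

Lemma vline0 u t : vadd u (vsc t (v0 C)) = u. Proof. vring. Qed.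

Lemma pstatic n1 n2 O a b : det3 a b O = 0 ->
  Fgen n1 n2 O a b \/ Fgen n2 n1 O b a -> pconcl n1 n2 O a b.
Proof.
move=> hd hF; exists (v0 C), (v0 C); split; rewrite /dot /v0 /vx /vy /vz /= ?mul0r ?addr0 //.
- by move=> t; rewrite !vline0.
- by move=> t _; rewrite !vline0.
Qed.

Lemma pconcl_swap n1 n2 O a b : pconcl n2 n1 O b a -> pconcl n1 n2 O a b.
Proof.
case=> [wb [wa [h1 h2 h3 h4]]]; exists wa, wb; split => //.
- by move=> t; have := h3 t; rewrite det3_swap12 => /eqP; rewrite oppr_eq0 => /eqP.
- by move=> t ht; case: (h4 t ht); [right|left].
Qed.

Lemma at_nonzero O n c : O != v0 C -> vsc c O != v0 C -> dot (vsc c O) n = 0 -> dot O n = 0.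
Proof.
move=> On hn; have -> : dot (vsc c O) n = c * dot O n by vring.
move/eqP; rewrite mulf_eq0 => /orP [/eqP c0|/eqP //].
by move: hn; rewrite c0 vsc0l eqxx.
Qed.

Lemma cross_line a t w O : cross a O = v0 C -> cross (vadd a (vsc t w)) O = vsc t (cross w O).
Proof.
move=> h; have -> : cross (vadd a (vsc t w)) O = vadd (cross a O) (vsc t (cross w O)) by vring.
rewrite h; vring.
Qed.

Lemma pair_C1 n1 n2 O a b : O != v0 C -> n1 != v0 C -> n2 != v0 C -> dot O n2 != 0 ->
  dot a n1 = 0 -> dot b n2 = 0 -> det3 a b O = 0 -> pconcl n1 n2 O a b.
Proof.
move=> On n1n n2n hO2 ha hb hd.
case: (eqVneq a (v0 C)) => [a0|an]; first by apply: pstatic => //; right; rewrite a0; exact: G0.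
case: (eqVneq b (v0 C)) => [b0|bn]; first by apply: pstatic => //; left; rewrite b0; exact: G0.
case: (eqVneq (cross a O) (v0 C)) => [aO|aO]; last by apply: pstatic => //; left; exact: Gproj.
have [c hc] := par_O On aO.
have hO1 : dot O n1 = 0 by apply: (at_nonzero (c := c) On); rewrite -hc.
case: (eqVneq (dot b n1) 0) => [hb1|hb1]; last first.
  apply: pstatic => //; right; apply: (GatO hc hO1 hb1 hb n2n).
have bO : cross b O != v0 C.
  apply/eqP => bO; have [c' hc'] := par_O On bO; move: hb; rewrite hc'.
  have -> : dot (vsc c' O) n2 = c' * dot O n2 by vring.
  move/eqP; rewrite mulf_eq0 (negbTE hO2) orbF => /eqP c0.
  by move: bn; rewrite hc' c0 vsc0l eqxx.
exists b, (v0 C); split => //.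
- by rewrite /dot /v0 /vx /vy /vz /= !mul0r !addr0.
- by move=> t; rewrite vline0 -[RHS]hd; vring.
- move=> t ht; left; rewrite vline0; apply: Gproj => //.
  + rewrite cross_line //; apply/eqP => /vsc_eq0 [/eqP|/eqP]; by rewrite ?(negbTE ht) ?(negbTE bO).
  + have -> : dot (vadd a (vsc t b)) n1 = dot a n1 + t * dot b n1 by vring.
    by rewrite ha hb1 mulr0 addr0.
  + by rewrite -[RHS]hd; vring.
Qed.

Lemma pair_C3 n1 n2 O a b : O != v0 C -> n1 != v0 C -> n2 != v0 C -> dot O n1 = 0 -> dot O n2 = 0 ->
  cross n1 n2 != v0 C -> dot a n1 = 0 -> dot b n2 = 0 -> det3 a b O = 0 -> pconcl n1 n2 O a b.
Proof.
move=> On n1n n2n hO1 hO2 hN ha hb hd.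
have hN' : cross n2 n1 != v0 C.
  apply: contra hN => /eqP h; have -> : cross n1 n2 = vsc (-1) (cross n2 n1) by vring.
  by rewrite h vsc0.
have hd' : det3 b a O = 0 by rewrite det3_swap12 hd oppr0.
case: (eqVneq a (v0 C)) => [a0|an]; first by apply: pstatic => //; right; rewrite a0; exact: G0.
case: (eqVneq b (v0 C)) => [b0|bn]; first by apply: pstatic => //; left; rewrite b0; exact: G0.
case: (eqVneq (cross a O) (v0 C)) => [aO|aO]; last by apply: pstatic => //; left; exact: GC3.
case: (eqVneq (cross b O) (v0 C)) => [bO|bO]; last by apply: pstatic => //; right; exact: GC3.
have [c hc] := par_O On aO; have [c' hc'] := par_O On bO.
have [w [hw1 hw2]] := w_exists hN.
have wO : cross w O != v0 C.
  apply/eqP => wO; have [c'' hc''] := par_O On wO; move: hw2; rewrite hc''.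
  have -> : dot (vsc c'' O) n2 = c'' * dot O n2 by vring.
  by rewrite hO2 mulr0 eqxx.
exists w, (v0 C); split => //.
- by rewrite /dot /v0 /vx /vy /vz /= !mul0r !addr0.
- by move=> t; rewrite vline0 hc' hc; vring.
- move=> t ht; left; rewrite vline0; apply: GC3 => //.
  + rewrite cross_line //; apply/eqP => /vsc_eq0 [/eqP|/eqP]; by rewrite ?(negbTE ht) ?(negbTE wO).
  + have -> : dot (vadd a (vsc t w)) n1 = dot a n1 + t * dot w n1 by vring.
    by rewrite ha hw1 mulr0 addr0.
  + by rewrite hc' hc; vring.
Qed.

Lemma pair_lemma n1 n2 O a b : O != v0 C -> n1 != v0 C -> n2 != v0 C ->
  ~ [/\ dot O n1 = 0, dot O n2 = 0 & cross n1 n2 = v0 C] ->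
  dot a n1 = 0 -> dot b n2 = 0 -> det3 a b O = 0 -> pconcl n1 n2 O a b.
Proof.
move=> On n1n n2n hC4 ha hb hd.
case: (eqVneq (dot O n2) 0) => [hO2|hO2]; last exact: pair_C1.
case: (eqVneq (dot O n1) 0) => [hO1|hO1].
- case: (eqVneq (cross n1 n2) (v0 C)) => [hN|hN]; first by exfalso; apply: hC4.
  exact: pair_C3.
- apply: pconcl_swap; apply: pair_C1 => //.
  by rewrite det3_swap12 hd oppr0.
Qed.
End PairLemma2.
Section Cover.
Variable R : realType.
Local Notation C := (R[i]).
Implicit Types g : conf R.

Definition mkth (vs : seq (v3 C)) (ls : seq C) : nat -> C :=
  fun j => nth 0 (flatten [seq [:: vx v; vy v; vz v] | v <- vs] ++ ls) j.

Lemma v3_eta (u : v3 C) : (vx u, vy u, vz u) = u.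
Proof. by case: u => [[]]. Qed.

Lemma mk_eq g (h : nat -> v3 C) : (forall k, (k < 7)%N -> crow g k = h k) ->
  g = mkconf (fun i => h (val i)).
Proof.
move=> H; rewrite -[LHS]mkconf_rowv; congr mkconf; apply: functional_extensionality => i.
by rewrite -H ?ltn_ord // /crow inord_val7.
Qed.

Lemma ord7_cases (P : nat -> Prop) : P 0 -> P 1 -> P 2 -> P 3 -> P 4 -> P 5 -> P 6 ->
  forall k, (k < 7)%N -> P k.
Proof. by move=> ? ? ? ? ? ? ? [|[|[|[|[|[|[|k]]]]]]]. Qed.

Lemma cover6 g : crow g 5 = v0 C -> ldet g [:: 1; 2; 4] = 0 -> ldet g [:: 0; 3; 6] = 0 ->
  V N6_dep g.
Proof.
move=> h5 hl1 hl2.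
have [n1 [n1n d1 d2 d4]] := normal_exists hl1.
have [n2 [n2n d0 d3 d6]] := normal_exists hl2.
have [y1 e1] := cross_surj n1n d1; have [y2 e2] := cross_surj n1n d2; have [y4 e4] := cross_surj n1n d4.
have [y0 e0] := cross_surj n2n d0; have [y3 e3] := cross_surj n2n d3; have [y6 e6] := cross_surj n2n d6.
have -> : g = mkconf (fun i => ch6 C (mkth [:: n1; n2; y0; y1; y2; y3; y4; v0 C; y6] [::]) (val i)).
  apply: mk_eq; apply: ord7_cases; rewrite /ch6 /mkth /pv /= ?v3_eta //.
exact: V_ch6.
Qed.

Lemma coverU g n : n != v0 C -> (forall k, (k < 7)%N -> dot (crow g k) n = 0) -> V U27_dep g.
Proof.
move=> nn H.
have [y0 e0] := cross_surj nn (H 0 isT); have [y1 e1] := cross_surj nn (H 1 isT).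
have [y2 e2] := cross_surj nn (H 2 isT); have [y3 e3] := cross_surj nn (H 3 isT).
have [y4 e4] := cross_surj nn (H 4 isT); have [y5 e5] := cross_surj nn (H 5 isT).
have [y6 e6] := cross_surj nn (H 6 isT).
have -> : g = mkconf (fun i => chU C (mkth [:: n; y0; y1; y2; y3; y4; y5; y6] [::]) (val i)).
  apply: mk_eq; apply: ord7_cases; rewrite /chU /mkth /pv /= ?v3_eta //.
exact: V_chU.
Qed.
End Cover.
Section CoverN.
Variable R : realType.
Local Notation C := (R[i]).
Implicit Types g : conf R.

Lemma pair_rows (n1 n2 O a b : v3 C) : Fgen n1 n2 O a b \/ Fgen n2 n1 O b a ->
  exists bb y lam, a = (pairrows O n1 n2 y lam bb).1 /\ b = (pairrows O n1 n2 y lam bb).2.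
Proof.
case => [[y [lam [ha hb]]]|[y [lam [hb ha]]]]; [exists true|exists false]; exists y, lam;
  by rewrite /pairrows ha hb.
Qed.

Lemma mk_eq2 (h1 h2 : nat -> v3 C) : (forall k, (k < 7)%N -> h1 k = h2 k) ->
  mkconf (fun i => h1 (val i)) = mkconf (fun i => h2 (val i)).
Proof. move=> H; congr mkconf; apply: functional_extensionality => i; apply: H; exact: ltn_ord. Qed.

Lemma eval_line (u w : v3 C) s :
  vmap (fun p => p.[s]) (vadd (vmap polyC u) (vsc 'X (vmap polyC w))) = vadd u (vsc s w).
Proof. case: u => [[? ?] ?]; case: w => [[? ?] ?]; by rewrite /vmap /vadd /vsc /vx /vy /vz /= !hornerE. Qed.

Lemma coverN g n1 n2 : crow g 5 != v0 C -> n1 != v0 C -> n2 != v0 C ->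
  ~ [/\ dot (crow g 5) n1 = 0, dot (crow g 5) n2 = 0 & cross n1 n2 = v0 C] ->
  dot (crow g 1) n1 = 0 -> dot (crow g 2) n1 = 0 -> dot (crow g 4) n1 = 0 ->
  dot (crow g 0) n2 = 0 -> dot (crow g 3) n2 = 0 -> dot (crow g 6) n2 = 0 ->
  det3 (crow g 2) (crow g 3) (crow g 5) = 0 -> det3 (crow g 1) (crow g 6) (crow g 5) = 0 ->
  det3 (crow g 4) (crow g 0) (crow g 5) = 0 -> V N_dep g.
Proof.
move=> On n1n n2n hC4 d1 d2 d4 d0 d3 d6 hA hB hC.
set O := crow g 5 in On hC4 hA hB hC.
have [waA [wbA [_ _ _ pA]]] := pair_lemma On n1n n2n hC4 d2 d3 hA.
have [waB [wbB [_ _ _ pB]]] := pair_lemma On n1n n2n hC4 d1 d6 hB.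
have [waC [wbC [_ _ _ pC]]] := pair_lemma On n1n n2n hC4 d4 d0 hC.
pose W := fun k => match k with 2 => waA | 3 => wbA | 1 => waB | 6 => wbB | 4 => waC | 0 => wbC
                               | _ => v0 C end.
pose G := fun i : 'I_7 => vadd (vmap polyC (crow g (val i))) (vsc 'X (vmap polyC (W (val i)))).
have evG : forall s, mkconf (evalc G s) = mkconf (fun i => vadd (crow g (val i)) (vsc s (W (val i)))).
  by move=> s; congr mkconf; apply: functional_extensionality => i; rewrite /evalc /G eval_line.
have Xn : ('X : {poly C}) != 0 by rewrite polyX_eq0.
have := curve_closure (A := V N_dep) (G := G) Xn.
have -> : mkconf (evalc G 0) = g.
  rewrite evG; apply: esym; apply: (mk_eq (h := fun k => vadd (crow g k) (vsc 0 (W k)))) => k _.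
  by rewrite vsc0l vadd0.
move=> H; apply: closure_idem; apply: H => s; rewrite hornerX => hs.
rewrite evG; apply: closure_sub.
have [bA [yA [lA [eA1 eA2]]]] := pair_rows (pA s hs).
have [bB [yB [lB [eB1 eB2]]]] := pair_rows (pB s hs).
have [bC [yC [lC [eC1 eC2]]]] := pair_rows (pC s hs).
have -> : mkconf (fun i => vadd (crow g (val i)) (vsc s (W (val i)))) =
          mkconf (fun i => chN bA bB bC C (mkth [:: O; n1; n2; yA; yB; yC] [:: lA; lB; lC]) (val i)).
  apply: (mk_eq2 (h1 := fun k => vadd (crow g k) (vsc s (W k)))
    (h2 := fun k => chN bA bB bC C (mkth [:: O; n1; n2; yA; yB; yC] [:: lA; lB; lC]) k)).
  apply: ord7_cases; rewrite /chN /mkth /pv /W /= ?v3_eta //.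
  by rewrite vline0.
exact: V_chN.
Qed.
End CoverN.
Theorem mainTheorem10 (R : realType) (g : conf R) :
  circuit_variety N_dep g <->
  (V N_dep g \/ V U27_dep g \/ V N6_dep g).
Proof.
split.
- move=> hCV; have Hl := dets_of_CV hCV.
  have l1 : ldet g [:: 1; 2; 4] = 0 by apply: Hl; rewrite !inE eqxx ?orbT.
  have l2 : ldet g [:: 0; 3; 6] = 0 by apply: Hl; rewrite !inE eqxx ?orbT.
  have lA : ldet g [:: 2; 3; 5] = 0 by apply: Hl; rewrite !inE eqxx ?orbT.
  have lB : ldet g [:: 1; 5; 6] = 0 by apply: Hl; rewrite !inE eqxx ?orbT.
  have lC : ldet g [:: 0; 4; 5] = 0 by apply: Hl; rewrite !inE eqxx ?orbT.
  case: (eqVneq (crow g 5) (v0 _)) => [h5|On].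
    by right; right; exact: cover6.
  have [n1 [n1n d1 d2 d4]] := normal_exists l1.
  have [n2 [n2n d0 d3 d6]] := normal_exists l2.
  case: (boolP [&& dot (crow g 5) n1 == 0, dot (crow g 5) n2 == 0 & cross n1 n2 == v0 _]).
  + case/and3P => /eqP h1 /eqP h2 /eqP hN; right; left; apply: (coverU n1n).
    have [c hc] := par_of_cross0 n2n hN.
    have e2 : forall x, dot x n2 = 0 -> dot x n1 = 0.
      move=> x hx; rewrite hc; have -> : dot x (vsc c n2) = c * dot x n2 by vring.
      by rewrite hx mulr0.
    by apply: ord7_cases => //; apply: e2.
  + move=> hC4; left; apply: (coverN On n1n n2n _ d1 d2 d4 d0 d3 d6).
    * by case=> h1 h2 hN; move: hC4; rewrite h1 h2 hN !eqxx.
    * exact: lA.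
    * by move: lB; rewrite /ldet /= det3_swap23 => /eqP; rewrite oppr_eq0 => /eqP.
    * by move: lC; rewrite /ldet /= det3_swap12 => /eqP; rewrite oppr_eq0 => /eqP.
- case => [hV|[hV|hV]]; apply: (V_CV _ hV); [exact: Nl_depN|exact: Nl_depU|exact: Nl_dep6].
Qed.
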